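(* Let $K$ be a field of characteristic $p>0$. Let $W_1,W_2$ be subfields of $K$ such that $(K,W_1,W_2)$ is a $2$-foliation on $K$, and let $W_3$ be a subfield of $W_2$ such that $(W_1,W_2,W_3)$ is a $2$-foliation on $W_1$. Then $(K,W_1,W_2,W_3)$ is a $3$-foliation on $K$.
   Context: For a field $F$ of characteristic $p$, a power tower on $F$ is a sequence of subfields $V_0,V_1,\ldots$ of $F$ with $V_j=V_i\cdot F^{p^j}$ whenever $j\le i$ ($\cdot$ = compositum in $F$). For a positive integer $n$, an $n$-foliation on $F$ is a chain of subfields $F=V_0\supseteq V_1\supseteq\cdots\supseteq V_n$ such that the sequence $V_0,V_1,\ldots,V_n,V_n,V_n,\ldots$ is a power tower on $F$ of length exactly $n$ (i.e. $n$ is the least integer with $V_N=V_n$ for all $N\ge n$) and $\dim_{V_{i+1}}(V_i)=\dim_{V_{j+1}}(V_j)$ for all $0\le i,j<n$. *)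

(* Defs.v *)
From mathcomp Require Import all_boot all_algebra.
Set Implicit Arguments. Unset Strict Implicit. Unset Printing Implicit Defensive.
Import GRing.Theory.
Local Open Scope ring_scope.

Section Foliation.
Variable K : fieldType.

Definition sub_set (A B : K -> Prop) := forall x, A x -> B x.
Definition eq_set (A B : K -> Prop) := forall x, A x <-> B x.

Definition is_subfield (S : K -> Prop) :=
  [/\ S 0, S 1, (forall x y, S x -> S y -> S (x - y)),
      (forall x y, S x -> S y -> S (x * y)) & (forall x, S x -> S x^-1)].

(* The compositum (inside K) of V and F^{p^j} := {y^(p^j) | y in F}:
   the smallest subfield of K containing both. *)
Definition compositum_pow (p : nat) (F V : K -> Prop) (j : nat) : K -> Prop :=
  fun x => forall S, is_subfield S -> sub_set V S ->
    (forall y, F y -> S (y ^+ (p ^ j))) -> S x.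

Definition lin_indep (L B : K -> Prop) :=
  forall (s : seq K) (c : K -> K), uniq s -> (forall b, b \in s -> B b) ->
    (forall b, L (c b)) -> \sum_(b <- s) c b * b = 0 ->
    forall b, b \in s -> c b = 0.

Definition spans (L B V : K -> Prop) :=
  forall x, V x -> exists (s : seq K) (c : K -> K),
    [/\ (forall b, b \in s -> B b), (forall b, L (c b)) &
        x = \sum_(b <- s) c b * b].

Definition is_basis (V L B : K -> Prop) :=
  [/\ sub_set B V, lin_indep L B & spans L B V].

(* dim_{L1}(V1) = dim_{L2}(V2) (as cardinals): some basis of V1 over L1 is
   in bijection with some basis of V2 over L2. *)
Definition same_dim (V1 L1 V2 L2 : K -> Prop) :=
  exists B1 B2 (f g : K -> K),
    [/\ is_basis V1 L1 B1, is_basis V2 L2 B2,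
        (forall b, B1 b -> B2 (f b)) /\ (forall b, B2 b -> B1 (g b)),
        (forall b, B1 b -> g (f b) = b) & (forall b, B2 b -> f (g b) = b)].

(* The chain s = [:: V_0; ...; V_n] extended by V_n forever. *)
Definition ext_seq (s : seq (K -> Prop)) (N : nat) : K -> Prop :=
  nth (fun _ => False) s (minn N (size s).-1).

Definition power_tower (p : nat) (F : K -> Prop) (V : nat -> K -> Prop) :=
  (forall i, is_subfield (V i) /\ sub_set (V i) F) /\
  (forall i j, (j <= i)%N -> eq_set (V j) (compositum_pow p F (V i) j)).

Definition foliation (p : nat) (F : K -> Prop) (n : nat) (s : seq (K -> Prop)) :=
  let V := ext_seq s in
  [/\ (0 < n)%N /\ size s = n.+1, eq_set (V 0%N) F,
      (forall i, (i < n)%N -> sub_set (V i.+1) (V i)) /\ power_tower p F V,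
      (* length exactly n: n is the least m with V_N = V_m for all N >= m *)
      (forall m, (m < n)%N -> ~ (forall N, (m <= N)%N -> eq_set (V N) (V m))) &
      (forall i j, (i < n)%N -> (j < n)%N ->
         same_dim (V i) (V i.+1) (V j) (V j.+1))].

End Foliation.

(* Main.v *)
From HB Require Import structures.
Require Import Defs.
From mathcomp Require Import all_boot all_algebra.
From mathcomp Require Import classical_sets boolp cardinality functions.
From mathcomp Require Import zify.
Set Implicit Arguments. Unset Strict Implicit. Unset Printing Implicit Defensive.
Import GRing.Theory.

Section LA.
Local Open Scope ring_scope.
Variable K : fieldType.
Implicit Types (L C D : K -> Prop).

Lemma sf0 L : is_subfield L -> L 0. Proof. by case. Qed.
Lemma sf1 L : is_subfield L -> L 1. Proof. by case. Qed.
Lemma sfB L x y : is_subfield L -> L x -> L y -> L (x - y). Proof. by case=> _ _ h _ _; apply: h. Qed.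
Lemma sfM L x y : is_subfield L -> L x -> L y -> L (x * y). Proof. by case=> _ _ _ h _; apply: h. Qed.
Lemma sfV L x : is_subfield L -> L x -> L x^-1. Proof. by case=> _ _ _ _ h; apply: h. Qed.
Lemma sfN L x : is_subfield L -> L x -> L (- x).
Proof. by move=> hL hx; rewrite -sub0r; apply: sfB => //; apply: sf0. Qed.
Lemma sfD L x y : is_subfield L -> L x -> L y -> L (x + y).
Proof. by move=> hL hx hy; rewrite -[y]opprK; apply: sfB => //; apply: sfN. Qed.
Lemma sfX L x n : is_subfield L -> L x -> L (x ^+ n).
Proof. move=> hL hx; elim: n => [|n IH]; first by rewrite expr0; apply: sf1.
by rewrite exprS; apply: sfM. Qed.
Lemma sf_sum L (I : Type) (r : seq I) (P : pred I) (F : I -> K) :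
  is_subfield L -> (forall i, P i -> L (F i)) -> L (\sum_(i <- r | P i) F i).
Proof. move=> hL hF; apply: (big_ind L) => //; [exact: sf0 | move=> ? ?; exact: sfD]. Qed.

Definition lspan L C (x : K) := exists t : seq (K * K),
  (forall u, u \in t -> L u.1 /\ C u.2) /\ x = \sum_(u <- t) u.1 * u.2.

Lemma span_mem L C x : is_subfield L -> C x -> lspan L C x.
Proof.
move=> hL hx; exists [:: (1, x)]; split; last by rewrite big_seq1 mul1r.
by move=> u; rewrite inE => /eqP -> /=; split => //; apply: sf1.
Qed.

Lemma span0 L C : lspan L C 0.
Proof. by exists [::]; split => //; rewrite big_nil. Qed.

Lemma spanD L C x y : lspan L C x -> lspan L C y -> lspan L C (x + y).
Proof.
move=> [t1 [h1 ->]] [t2 [h2 ->]]; exists (t1 ++ t2); split; last by rewrite big_cat.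
by move=> u; rewrite mem_cat => /orP[/h1|/h2].
Qed.

Lemma spanZ L C a x : is_subfield L -> L a -> lspan L C x -> lspan L C (a * x).
Proof.
move=> hL ha [t [ht ->]]; exists [seq (a * u.1, u.2) | u <- t]; split.
  move=> u /mapP[v vt ->] /=; have [h1 h2] := ht v vt; split => //; exact: sfM.
by rewrite big_map mulr_sumr; apply: eq_bigr => u _ /=; rewrite mulrA.
Qed.

Lemma span_trans L C C' x : is_subfield L -> (forall y, C' y -> lspan L C y) ->
  lspan L C' x -> lspan L C x.
Proof.
move=> hL hC [t [ht ->]]; elim: t ht => [|u t IH] ht; first by rewrite big_nil; apply: span0.
rewrite big_cons; apply: spanD.
  have [h1 h2] := ht u (mem_head _ _); exact: spanZ (hC _ h2).
by apply: IH => v vt; apply: ht; rewrite inE vt orbT.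
Qed.

Lemma span_sub L C D x : sub_set C D -> lspan L C x -> lspan L D x.
Proof. move=> hCD [t [ht ->]]; exists t; split => // u /ht [? ?]; split => //; exact: hCD. Qed.

Lemma bridge (s : seq K) (t : seq (K * K)) : uniq s -> (forall u, u \in t -> u.2 \in s) ->
  \sum_(y <- s) (\sum_(u <- t | u.2 == y) u.1) * y = \sum_(u <- t) u.1 * u.2.
Proof.
move=> us ht.
transitivity (\sum_(y <- s) \sum_(u <- t | u.2 == y) u.1 * u.2).
  apply: eq_bigr => y _; rewrite mulr_suml; apply: eq_big => // u /eqP E.
  by rewrite E.
rewrite (exchange_big_dep predT) //= big_seq_cond [RHS]big_seq_cond.
apply: eq_big => [u|u /andP[ut _]]; first by rewrite /= !andbT.
rewrite -big_filter (@eq_filter _ _ (pred1 u.2)); last by move=> y; rewrite /= eq_sym.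
by rewrite filter_pred1_uniq ?ht // big_seq1.
Qed.

Lemma lin_indep_sub L C D : sub_set C D -> lin_indep L D -> lin_indep L C.
Proof. move=> hCD hD s c us hs hc hsum b bs; apply: (hD s c) => // y ys; exact/hCD/hs. Qed.

Lemma indep_not_span L C D b : is_subfield L -> lin_indep L D -> D b ->
  (forall x, C x -> D x /\ x <> b) -> ~ lspan L C b.
Proof.
move=> hL hD Db hC [t [ht tE]].
pose t' := (-1, b) :: t.
pose s := undup (map snd t').
pose c y := \sum_(u <- t' | u.2 == y) u.1.
have hsum : \sum_(y <- s) c y * y = 0.
  rewrite bridge ?undup_uniq //; last by move=> u ut; rewrite mem_undup; apply: map_f.
  by rewrite big_cons /= -tE mulN1r addNr.
have cbE : c b = -1 + 0.
  rewrite /c big_cons /= eqxx; congr (_ + _); rewrite big_seq_cond big1 // => u /andP[ut /eqP ub].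
  by have [_ /hC [_]] := ht u ut.
have : c b = 0.
  apply: (hD s c (undup_uniq _)) => //.
  - move=> y; rewrite mem_undup /= inE => /orP[/eqP -> //|/mapP[u ut ->]].
    by have [_ /hC[]] := ht u ut.
  - move=> y; rewrite /c big_seq_cond; apply: sf_sum => // u /andP[+ _]; rewrite inE => /orP[/eqP -> |ut]; first by apply: sfN => //; exact: sf1.
    by have [] := ht u ut.
  - by rewrite mem_undup /= inE eqxx.
by rewrite cbE addr0 => /eqP; rewrite oppr_eq0 oner_eq0.
Qed.

Lemma indep_ext L C x : is_subfield L -> lin_indep L C -> ~ lspan L C x ->
  lin_indep L (fun y => C y \/ y = x).
Proof.
move=> hL hC hx s c us hs hc hsum.
have [/andP[xs cx]|H] := boolP ((x \in s) && (c x != 0)).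
  exfalso; apply: hx.
  move: hsum; rewrite (bigD1_seq x xs us) /= => h.
  exists [seq (- (c x)^-1 * c y, y) | y <- s & y != x]; split.
    move=> u /mapP[y]; rewrite mem_filter => /andP[yx ys] -> /=; split.
      by apply: sfM => //; apply: sfN => //; exact: sfV.
    by case: (hs y ys) => // /eqP; rewrite (negPf yx).
  rewrite big_map big_filter.
  have xE : x = - (c x)^-1 * \sum_(i <- s | i != x) c i * i.
    apply: (mulfI cx); rewrite mulrA mulrN mulfV // mulN1r.
    by apply/eqP; rewrite -addr_eq0 h.
  rewrite {1}xE mulr_sumr; apply: eq_bigr => y _; by rewrite mulrA.
have hx0 : x \in s -> c x = 0.
  by move=> xs; move: H; rewrite xs /= negbK => /eqP.
have hs' : \sum_(y <- [seq y <- s | y != x]) c y * y = 0.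
  rewrite big_filter; move: hsum; rewrite (bigID (fun y => y != x)) /=.
  rewrite [X in _ + X]big_seq_cond [X in _ + X]big1 ?addr0 // => y /andP[ys].
  by rewrite negbK => /eqP E; rewrite E hx0 ?mul0r // -E.
move=> b bs; have [E|bx] := eqVneq b x; first by rewrite E; apply: hx0; rewrite -E.
apply: (hC _ c (filter_uniq (fun y => y != x) us)) => //; last by rewrite mem_filter bx bs.
move=> y; rewrite mem_filter => /andP[yx ys].
by case: (hs y ys) => // /eqP; rewrite (negPf yx).
Qed.

End LA.

Section Z.
Local Open Scope ring_scope.
Local Open Scope classical_set_scope.
Variable K : fieldType.
Implicit Types (L B : K -> Prop).

Definition Cset B (R : set (K * K)) x :=
  (exists a, R (a, x)) \/ (B x /\ forall z, ~ R (x, z)).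

Definition goodR L B B' (R : set (K * K)) :=
  [/\ (forall a y, R (a, y) -> B a /\ B' y),
      (forall a y z, R (a, y) -> R (a, z) -> y = z),
      (forall a a' y, R (a, y) -> R (a', y) -> a = a'),
      (forall a y, R (a, y) -> B y -> exists z, R (y, z)) &
      lin_indep L (Cset B R)].

Lemma chain_good L B B' (F : set (set (K * K))) : lin_indep L B ->
  F `<=` goodR L B B' -> total_on F subset -> goodR L B B' (\bigcup_(X in F) X).
Proof.
move=> hB hF htot; split.
- by move=> a y [X FX Xay]; have [h _ _ _ _] := hF X FX; exact: h.
- move=> a y z [X FX h1] [Y FY h2]; case: (htot X Y FX FY) => XY.
    by have [_ h _ _ _] := hF Y FY; exact: h _ _ _ (XY _ h1) h2.
  by have [_ h _ _ _] := hF X FX; exact: h _ _ _ h1 (XY _ h2).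
- move=> a a' y [X FX h1] [Y FY h2]; case: (htot X Y FX FY) => XY.
    by have [_ _ h _ _] := hF Y FY; exact: h _ _ _ (XY _ h1) h2.
  by have [_ _ h _ _] := hF X FX; exact: h _ _ _ h1 (XY _ h2).
- move=> a y [X FX h] By; have [_ _ _ h4 _] := hF X FX.
  by have [z hz] := h4 _ _ h By; exists z; exists X.
move=> s c us hs hc hsum.
pose U := \bigcup_(X in F) X.
have inv : forall s' : seq K, (forall x, x \in s' -> Cset B U x) ->
    exists X, (X = set0 \/ F X) /\ forall y, y \in s' ->
      (exists a, X (a, y)) \/ (B y /\ forall z, ~ U (y, z)).
  elim=> [|x s' IH] hs'.
    by exists set0; split; [left|].
  have [X [hX Xs]] := IH (fun y ys => hs' y (@mem_behead _ (x :: s') _ ys)).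
  case: (hs' x (mem_head _ _)) => [[a [Y FY Yax]]|hx2]; last first.
    exists X; split => // y; rewrite inE => /orP[/eqP -> |ys]; first by right.
    exact: Xs.
  have [Z [FZ XZ YZ]] : exists Z, [/\ F Z, X `<=` Z & Y `<=` Z].
    case: hX => [-> | FX]; first by exists Y; split => // u [].
    case: (htot X Y FX FY) => XY; first by exists Y; split.
    by exists X; split.
  exists Z; split; first by right.
  move=> y; rewrite inE => /orP[/eqP -> |ys]; first by left; exists a; exact: YZ.
  case: (Xs y ys) => [[a' h]|h]; last by right.
  by left; exists a'; exact: XZ.
have [X [hX Xs]] := inv s (fun x xs => hs x xs).
have XU : X `<=` U.
  by case: hX => [-> // | FX] u Xu; exists X.
have hXi : lin_indep L (Cset B X).
  case: hX => [-> | FX]; last by have [_ _ _ _ h] := hF X FX.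
  apply: (lin_indep_sub _ hB) => x [[a []]|[]//].
apply: (hXi s c) => // x xs; case: (Xs x xs) => [h|[Bx h]]; first by left.
by right; split => // z /XU; apply: h.
Qed.

Lemma basis_inj L B B' V : is_subfield L -> sub_set B V -> lin_indep L B ->
  (forall x, V x -> lspan L B' x) ->
  exists h : K -> K, (forall b, B b -> B' (h b)) /\ (forall a b, B a -> B b -> h a = h b -> a = b).
Proof.
move=> hL BV hB hV.
have [R [gR Rmax]] := Zorn_bigcup (fun F => @chain_good L B B' F hB).
case: (gR) => g1 g2 g3 g4 g5.
have tot : forall b, B b -> exists y, R (b, y).
  move=> b Bb; case: (pselect (exists y, R (b, y))) => // hn; exfalso.
  have hnR : forall z, ~ R (b, z) by move=> z hz; apply: hn; exists z.
  have notb : forall a, ~ R (a, b).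
    by move=> a h; have [z hz] := g4 _ _ h Bb; exact: hnR hz.
  pose C x := Cset B R x /\ x <> b.
  have CC : forall x, C x -> Cset B R x /\ x <> b by [].
  have [b' [B'b' nspan]] : exists b', B' b' /\ ~ lspan L C b'.
    apply: contrapT => hne.
    apply: (indep_not_span hL g5 (or_intror (conj Bb hnR)) CC).
    apply: (span_trans hL _ (hV _ (BV _ Bb))) => y B'y.
    by apply: contrapT => hy; apply: hne; exists y.
  have b'C : ~ C b' by move=> h; apply: nspan; apply: span_mem.
  pose S := fun u => R u \/ u = (b, b').
  apply: (Rmax S).
    split; first by move=> u hu; left.
    by move=> hSR; apply: (hnR b'); apply: hSR; right.
  split.
  - by move=> a y [h|[-> ->]]; [exact: g1|].
  - move=> a y z [h1|[E1 E2]] [h2|[E3 E4]].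
    + exact: g2 h1 h2.
    + by exfalso; apply: (hnR y); rewrite -E3.
    + by exfalso; apply: (hnR z); rewrite -E1.
    + by rewrite E2 E4.
  - move=> a a' y [h1|[E1 E2]] [h2|[E3 E4]].
    + exact: g3 h1 h2.
    + exfalso; apply: b'C; split; first by left; exists a; rewrite -E4.
      by move=> E; apply: (notb a); rewrite -E -E4.
    + exfalso; apply: b'C; split; first by left; exists a'; rewrite -E2.
      by move=> E; apply: (notb a'); rewrite -E -E2.
    + by rewrite E1 E3.
  - move=> a y [h|[E1 E2]] By.
      by have [z hz] := g4 _ _ h By; exists z; left.
    rewrite E2 in By *.
    case: (pselect (exists z, R (b', z))) => [[z hz]|hn']; first by exists z; left.
    case: (pselect (b' = b)) => [E|nE]; first by exists b'; right; rewrite E.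
    exfalso; apply: b'C; split => //; right; split => // z hz; apply: hn'; exists z; exact: hz.
  - apply: (@lin_indep_sub _ L _ (fun y => C y \/ y = b')); last first.
      apply: indep_ext => //; apply: (lin_indep_sub _ g5) => x [hx _]; exact: hx.
    move=> w [[a [h|[E1 E2]]]|[Bx hx]].
    + by left; split; [left; exists a | move=> E; apply: (notb a); rewrite -E].
    + by right.
    + left; split; first by right; split => // z hz; apply: (hx z); left.
      by move=> E; apply: (hx b'); right; rewrite E.
pose h x := if pselect (exists y, R (x, y)) is left e then projT1 (cid e) else x.
have hP : forall b, B b -> R (b, h b).
  move=> b Bb; rewrite /h; case: pselect => [e|n]; first exact: (projT2 (cid e)).
  by exfalso; apply: n; exact: tot.
exists h; split; first by move=> b Bb; have [] := g1 _ _ (hP b Bb).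
by move=> a b Ba Bb E; apply: (g3 _ _ (h a) (hP a Ba)); rewrite E; exact: hP.
Qed.

End Z.

Section D.
Local Open Scope ring_scope.
Local Open Scope classical_set_scope.
Local Open Scope card_scope.
Variable K : fieldType.

Definition Kp : Type := K.
HB.instance Definition _ := Choice.on Kp.
HB.instance Definition _ := isPointed.Build Kp (0%R : K).

Lemma cbK (B B' : K -> Prop) (h h' : K -> K) :
  (forall b, B b -> B' (h b)) -> (forall a b, B a -> B b -> h a = h b -> a = b) ->
  (forall b, B' b -> B (h' b)) -> (forall a b, B' a -> B' b -> h' a = h' b -> a = b) ->
  exists k : K -> K, [/\ (forall b, B b -> B' (k b)),
    (forall a b, B a -> B b -> k a = k b -> a = b) &
    (forall y, B' y -> exists x, B x /\ k x = y)].
Proof.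
move=> hm hi h'm h'i.
have le1 : (B : set Kp) #<= (B' : set Kp).
  apply/pcard_leP/injfunPex; exists h; first by move=> x; exact: hm.
  by move=> a b; rewrite !in_setE; exact: hi.
have le2 : (B' : set Kp) #<= (B : set Kp).
  apply/pcard_leP/injfunPex; exists h'; first by move=> x; exact: h'm.
  by move=> a b; rewrite !in_setE; exact: h'i.
have /pcard_eqP/bijPex[k [k1 k2 k3]] := Cantor_Bernstein le1 le2.
exists k; split.
- by move=> b Bb; exact: k1.
- by move=> a b Ba Bb; apply: k2; rewrite in_setE.
- by move=> y /k3 [x Bx E]; exists x.
Qed.

Lemma bij_same (V1 L1 V2 L2 : K -> Prop) (B1 B2 : K -> Prop) (F : K -> K) :
  is_basis V1 L1 B1 -> is_basis V2 L2 B2 ->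
  (forall b, B1 b -> B2 (F b)) -> (forall a b, B1 a -> B1 b -> F a = F b -> a = b) ->
  (forall y, B2 y -> exists x, B1 x /\ F x = y) -> same_dim V1 L1 V2 L2.
Proof.
move=> bas1 bas2 Fm Fi Fs.
pose G y := if pselect (exists x, B1 x /\ F x = y) is left e then projT1 (cid e) else y.
have GP : forall y, B2 y -> B1 (G y) /\ F (G y) = y.
  move=> y B2y; rewrite /G; case: pselect => [e|n]; first exact: (projT2 (cid e)).
  by exfalso; apply: n; exact: Fs.
exists B1, B2, F, G; split => //.
- by split => // b /GP [].
- move=> b B1b; have [h1 h2] := GP _ (Fm _ B1b); exact: Fi.
- by move=> b /GP [].
Qed.

Lemma spans_lspan (L B V : K -> Prop) : spans L B V -> forall x, V x -> lspan L B x.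
Proof.
move=> hs x /hs [s [c [h1 h2 ->]]]; exists [seq (c b, b) | b <- s]; split.
  by move=> u /mapP[b bs ->]; split; [exact: h2 | exact: h1].
by rewrite big_map.
Qed.

Lemma same_dim_trans (A1 L1 A2 L2 A3 L3 : K -> Prop) : is_subfield L2 ->
  same_dim A1 L1 A2 L2 -> same_dim A2 L2 A3 L3 -> same_dim A1 L1 A3 L3.
Proof.
move=> hL [B1 [B2 [f [g [bas1 bas2 [m1 m2] gf fg]]]]] [B2' [B3 [f' [g' [bas2' bas3 [m1' m2'] gf' fg']]]]].
have [s2 i2 sp2] := bas2; have [s2' i2' sp2'] := bas2'.
have [h [hm hi]] := basis_inj hL s2 i2 (spans_lspan sp2').
have [h' [h'm h'i]] := basis_inj hL s2' i2' (spans_lspan sp2).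
have [k [km ki ks]] := cbK hm hi h'm h'i.
apply: (bij_same (F := fun x => f' (k (f x))) bas1 bas3).
- by move=> b B1b; apply/m1'/km/m1.
- move=> a b Ba Bb E.
  have E1 : k (f a) = k (f b) by rewrite -(gf' _ (km _ (m1 _ Ba))) E gf' //; apply/km/m1.
  have E2 : f a = f b by apply: ki E1; apply: m1.
  by rewrite -(gf _ Ba) E2 gf.
- move=> y B3y; have [x2 [B2x2 kx2]] := ks _ (m2' _ B3y).
  exists (g x2); split; first exact: m2.
  by rewrite fg // kx2 fg'.
Qed.

Lemma same_dim_sym (A1 L1 A2 L2 : K -> Prop) : same_dim A1 L1 A2 L2 -> same_dim A2 L2 A1 L1.
Proof.
move=> [B1 [B2 [f [g [bas1 bas2 [m1 m2] gf fg]]]]].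
by exists B2, B1, g, f; split.
Qed.

End D.

Section M.
Local Open Scope ring_scope.
Variable K : fieldType.
Variable p : nat.
Hypothesis hp : p \in [pchar K].

Lemma comp_min (F V S : K -> Prop) j : is_subfield S -> sub_set V S ->
  (forall y, F y -> S (y ^+ (p ^ j))) -> sub_set (compositum_pow p F V j) S.
Proof. by move=> hS hV hF x hx; apply: hx. Qed.

Lemma sfTT : is_subfield (fun _ : K => True). Proof. by split. Qed.

Lemma frob_sf (S : K -> Prop) : is_subfield S -> is_subfield (fun x => S (x ^+ p)).
Proof.
move=> hS; split.
- by have := pFrobenius_aut0 hp; rewrite pFrobenius_autE => ->; apply: sf0.
- by rewrite expr1n; apply: sf1.
- move=> x y hx hy; have := pFrobenius_autB_comm hp (mulrC x y).
  by rewrite !pFrobenius_autE => ->; apply: sfB.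
- by move=> x y hx hy; rewrite exprMn; apply: sfM.
- by move=> x hx; rewrite exprVn; apply: sfV.
Qed.

Lemma pw2 (y : K) : y ^+ (p ^ 2) = (y ^+ p) ^+ p.
Proof. by rewrite -exprM mulnn. Qed.

End M.

Lemma ext3 (K : fieldType) (a b c : K -> Prop) N : (2 <= N)%N -> ext_seq [:: a; b; c] N = c.
Proof. by move=> h; rewrite /ext_seq /= (minn_idPr h). Qed.
Lemma ext4 (K : fieldType) (a b c d : K -> Prop) N : (3 <= N)%N -> ext_seq [:: a; b; c; d] N = d.
Proof. by move=> h; rewrite /ext_seq /= (minn_idPr h). Qed.

Section Main.
Local Open Scope ring_scope.
Lemma main_aux (K : fieldType) (p : nat) (hp : p \in [pchar K]%R)
  (W1 W2 W3 : K -> Prop) :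
  is_subfield W1 -> is_subfield W2 -> is_subfield W3 -> sub_set W3 W2 ->
  foliation p (fun _ : K => True) 2 [:: (fun _ : K => True); W1; W2] ->
  foliation p W1 2 [:: W1; W2; W3] ->
  foliation p (fun _ : K => True) 3 [:: (fun _ : K => True); W1; W2; W3].
Proof.
move=> sW1 sW2 sW3 W32 [_ _ [ch1 [_ pt1]] ex1 dim1] [_ _ [ch2 [_ pt2]] ex2 dim2].
have W21 : sub_set W2 W1 by exact: (ch1 1%N).
have Kp1 : forall y, W1 (y ^+ p).
  move=> y; have [_ h] := pt1 1%N 1%N isT (y ^+ p); apply: h.
  by move=> S _ _; rewrite expn1; apply.
have Kp2 : forall y, W2 (y ^+ (p ^ 2)).
  move=> y; have [_ h] := pt1 2%N 2%N isT (y ^+ (p ^ 2)); apply: h.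
  by move=> S _ _; apply.
have c1 : forall S, is_subfield S -> sub_set W2 S -> (forall y, S (y ^+ p)) -> sub_set W1 S.
  move=> S hS h2 hp1 x /(proj1 (pt1 2%N 1%N isT x)); apply => // y _; rewrite expn1; exact: hp1.
have e1 : forall y, W1 y -> W3 (y ^+ (p ^ 2)).
  move=> y Wy; have [_ h] := pt2 2%N 2%N isT (y ^+ (p ^ 2)); apply: h.
  by move=> S _ _; apply.
have f1 : forall S, is_subfield S -> sub_set W3 S -> (forall y, W1 y -> S (y ^+ p)) -> sub_set W2 S.
  move=> S hS h3 hp1 x /(proj1 (pt2 2%N 1%N isT x)); apply => // y Wy; rewrite expn1; exact: hp1.
have g2 : forall S, is_subfield S -> sub_set W3 S -> (forall y, S (y ^+ (p ^ 2))) -> sub_set W2 S.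
  move=> S hS h3 hy.
  have hSp := frob_sf hp hS.
  have W2Sp : sub_set W2 (fun x => S (x ^+ p)).
    apply: f1 => // [x W3x | y Wy]; first by apply: h3; apply: sfX.
    by rewrite -pw2; exact: hy.
  have W1Sp : sub_set W1 (fun x => S (x ^+ p)).
    by apply: c1 => // y; rewrite -pw2; exact: hy.
  by apply: f1 => // y Wy; exact: W1Sp y Wy.
have g1 : forall S, is_subfield S -> sub_set W3 S -> (forall y, S (y ^+ (p ^ 1))) -> sub_set W1 S.
  move=> S hS h3 hy; rewrite expn1 in hy; apply: c1 => //.
  by apply: f1 => // y _; exact: hy.
have g3 : forall j, (3 <= j)%N -> forall y, W3 (y ^+ (p ^ j)).
  move=> j hj y.
  have -> : (p ^ j = p ^ (j - 3) * p * p ^ 2)%N.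
    by rewrite -expnSr -expnD; congr expn; lia.
  by rewrite exprM; apply: e1; rewrite exprM; exact: Kp1.
pose U := ext_seq [:: (fun _ : K => True); W1; W2; W3].
have Usub : forall i, is_subfield (U i).
  case=> [|[|[|i]]] //; exact: sfTT.
have Umono1 : forall i, sub_set (U i.+1) (U i).
  case=> [|[|[|i]]] // x; rewrite /U ?ext4 //; exact: W21.
have Umono : forall i j, (j <= i)%N -> sub_set (U i) (U j).
  elim=> [|i IH] j hj; first by move: hj; rewrite leqn0 => /eqP ->.
  move: hj; rewrite leq_eqVlt => /orP[/eqP -> //|hj] x /Umono1 hx.
  exact: IH.
have U3 : forall i, sub_set W3 (U i).
  case=> [|[|[|i]]] // x hx; rewrite /U /=; first [exact: W32 hx | exact: W21 (W32 _ hx) | done].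
have Upow : forall j y, U j (y ^+ (p ^ j)).
  case=> [|[|[|j]]] y //=.
  by rewrite /U ext4 //; apply: g3.
have Umin : forall j S, is_subfield S -> sub_set W3 S -> (forall y, S (y ^+ (p ^ j))) ->
    sub_set (U j) S.
  case=> [|[|[|j]]] S hS h3 hy.
  - by move=> x _; have := hy x; rewrite expn0 expr1.
  - exact: g1.
  - exact: g2.
  - by rewrite /U ext4.
have d01 : same_dim (fun _ : K => True) W1 W1 W2 by exact: (dim1 0%N 1%N).
have d12 : same_dim W1 W2 W2 W3 by exact: (dim2 0%N 1%N).
split.
- by [].
- by [].
- split; first by case=> [|[|[|i]]] // _; rewrite /U /=.
  split; first by move=> i; split => //; exact: Usub.
  move=> i j hji x; split.
    move=> hx S hS hi hF; apply: (Umin j S hS) => //.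
      by move=> z /(U3 i); exact: hi.
    by move=> y; exact: hF.
  by move=> hx; apply: hx => //; [exact: Umono | move=> y _; exact: Upow].
- case=> [|[|[|m]]] // _ hN.
  + apply: (ex1 0%N isT) => N _ x.
    case: N => [|[|N]] //=; first exact: (hN 1%N isT x).
    by rewrite ext3 //; exact: (hN 2%N isT x).
  + apply: (ex1 1%N isT) => N hN1 x.
    case: N hN1 => [|[|N]] // _; rewrite ext3 //; exact: (hN 2%N isT x).
  + apply: (ex2 1%N isT) => N hN1 x.
    case: N hN1 => [|[|N]] // _; rewrite ext3 //; exact: (hN 3%N isT x).
- have sym := @same_dim_sym K; have tr := @same_dim_trans K.
  case=> [|[|[|i]]] // [|[|[|j]]] // _ _ /=.
  all: first [ exact: d01 | exact: d12 | exact: sym _ _ _ _ d01 | exact: sym _ _ _ _ d12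
    | exact: tr _ _ _ _ _ _ sW2 d01 (sym _ _ _ _ d01)
    | exact: tr _ _ _ _ _ _ sW2 d01 d12
    | exact: tr _ _ _ _ _ _ sW1 (sym _ _ _ _ d01) d01
    | exact: tr _ _ _ _ _ _ sW2 (sym _ _ _ _ d12) d12
    | exact: sym _ _ _ _ (tr _ _ _ _ _ _ sW2 d01 d12) ].
Qed.
End Main.

Theorem mainTheorem13 (K : fieldType) (p : nat) (hp : p \in [pchar K]%R)
  (W1 W2 W3 : K -> Prop) :
  is_subfield W1 -> is_subfield W2 -> is_subfield W3 -> sub_set W3 W2 ->
  foliation p (fun _ : K => True) 2 [:: (fun _ : K => True); W1; W2] ->
  foliation p W1 2 [:: W1; W2; W3] ->
  foliation p (fun _ : K => True) 3 [:: (fun _ : K => True); W1; W2; W3].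
Proof. exact: main_aux. Qed.
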